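(* For every integer $n\ge1$, the proportion $P(0,n)$ of invertible matrices in $(\mathbb F_2)^{n\times n}$ satisfies $$P(0,n)>2^{-8/7}e^{-19/42}.$$
   Context: $P(d,n)$ denotes the proportion of matrices in $(\mathbb F_2)^{n\times n}$ whose null space has dimension $d$. *)

(* Defs.v *)
From HB Require Import structures.
From mathcomp Require Import all_boot all_order all_algebra.
From mathcomp Require Import all_classical all_reals all_analysis.
Set Implicit Arguments. Unset Strict Implicit. Unset Printing Implicit Defensive.
Import Order.TTheory GRing.Theory Num.Theory.
Local Open Scope ring_scope.

(* Null space of A : 'M_n (column vectors x with A x = 0) is the row kernel
   of A^T; its dimension is \rank (kermx A^T). *)
Definition nullity (n : nat) (A : 'M['F_2]_n) : nat := \rank (kermx A^T).

Definition Pprop (R : realType) (d n : nat) : R :=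
  (#|[set A : 'M['F_2]_n | nullity A == d]|%:R) / (#|{: 'M['F_2]_n}|%:R).

(* Main.v *)
Require Import Defs.
From HB Require Import structures.
From mathcomp Require Import all_boot all_order all_algebra.
From mathcomp Require Import all_classical all_reals all_analysis.
From mathcomp Require Import zify.
From Stdlib Require Import Lia.
From mathcomp Require Import ring lra.
Import Order.TTheory GRing.Theory Num.Theory.
Local Open Scope ring_scope.

Definition g (R : realType) (n : nat) : R := \prod_(i < n) (1 - (2^-1)^+(i.+1)).

Lemma gE (R : realType) (N : nat) :
  ((2 ^ 'C(N, 2) * \prod_(1 <= i < N.+1) (2 ^ i - 1))%N%:R / (2 ^ (N * N))%N%:R : R)
  = g R N.
Proof.
elim: N => [|N IH].
  rewrite /g big_ord0 big_geq // bin0n expn0 mul1n; lra.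
rewrite /g big_ord_recr /= -/(g R N) -IH.
rewrite binS bin1 big_nat_recr //= expnD.
have -> : (N.+1 * N.+1 = N * N + N + N.+1)%N by lia.
rewrite !expnD !natrM (natrB _ (expn_gt0 2 N.+1)) exprVn -natrX.
have hX : ((2 ^ N)%N%:R : R) != 0 by rewrite pnatr_eq0 expn_eq0.
have hY : ((2 ^ N.+1)%N%:R : R) != 0 by rewrite pnatr_eq0 expn_eq0.
have hQ : ((2 ^ (N * N))%N%:R : R) != 0 by rewrite pnatr_eq0 expn_eq0.
move: hX hY hQ.
move: ((2 ^ N)%N%:R : R) ((2 ^ N.+1)%N%:R : R) ((2 ^ (N * N))%N%:R : R)
  ((2 ^ 'C(N, 2))%N%:R : R) ((\prod_(1 <= i < N.+1) (2 ^ i - 1))%N%:R : R).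
move=> X Y Q A P hX hY hQ.
field.
by rewrite hX hY hQ.
Qed.

Lemma gS (R : realType) n : g R n.+1 = g R n * (1 - (2^-1)^+(n.+1)).
Proof. by rewrite /g big_ord_recr. Qed.

Lemma h_bounds (R : realType) k : 0 <= ((2:R)^-1)^+k <= 1.
Proof.
apply/andP; split; first by rewrite exprn_ge0 // invr_ge0.
by rewrite exprn_ile1 // ?invr_ge0 // invf_le1 // ler1n.
Qed.

Lemma g_ge0 (R : realType) n : 0 <= g R n.
Proof.
elim: n => [|n IH]; first by rewrite /g big_ord0.
rewrite gS mulr_ge0 // subr_ge0; by case/andP: (h_bounds R n.+1).
Qed.

Lemma g_decr (R : realType) m k : g R (m + k) <= g R m.
Proof.
elim: k => [|k IH]; first by rewrite addn0.
rewrite addnS gS; apply: le_trans IH.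
have := g_ge0 R (m + k); case/andP: (h_bounds R (m + k).+1) => h0 h1 g0.
rewrite ler_piMr //; lra.
Qed.

Lemma g_tail (R : realType) k :
  g R 5 * (1 - ((2:R)^-1)^+5 + ((2:R)^-1)^+(5 + k)) <= g R (5 + k).
Proof.
elim: k => [|k IH]; first by rewrite addn0 addrNK mulr1.
rewrite addnS (gS R (5 + k)).
have -> : ((2:R)^-1)^+(5 + k).+1 = 2^-1 * ((2:R)^-1)^+(5 + k) by rewrite exprS.
set x := ((2:R)^-1)^+(5 + k).
have x0 : 0 <= x by case/andP: (h_bounds R (5 + k)).
have x5 : x <= ((2:R)^-1)^+5.
  rewrite /x exprD ler_piMr //; by case/andP: (h_bounds R k).
have := g_ge0 R 5; have := g_ge0 R (5 + k).
set G := g R (5 + k); set G5 := g R 5; set h5 := ((2:R)^-1)^+5.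
move=> G0 G50.
have h51 : h5 <= 1 by case/andP: (h_bounds R 5).
have I1 : G5 * (1 - h5 + x) * (1 - 2^-1 * x) <= G * (1 - 2^-1 * x).
  apply: ler_wpM2r => //.
  have : (2:R)^-1 <= 1 by rewrite invf_le1 // ler1n.
  have : 0 <= (2:R)^-1 by rewrite invr_ge0.
  nra.
have E : G5 * x = 2 * (G5 * (2^-1 * x)) by field.
have I2 : 0 <= G5 * (2^-1 * x) * (h5 - x).
  by apply: mulr_ge0; [apply: mulr_ge0; [|apply: mulr_ge0]|]; rewrite ?subr_ge0 ?invr_ge0.
nra.
Qed.

Lemma g5E (R : realType) :
  g R 5 * (1 - ((2:R)^-1)^+5) = ((3%:R * 7%:R * 15%:R * 31%:R * 31%:R) / 2%:R ^+ 20 : R).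
Proof.
rewrite /g !big_ord_recr big_ord0 /=.
by field.
Qed.

Lemma g_lb (R : realType) n :
  ((3%:R * 7%:R * 15%:R * 31%:R * 31%:R) / 2%:R ^+ 20 : R) <= g R n.
Proof.
rewrite -g5E.
have G50 := g_ge0 R 5.
case/andP: (h_bounds R 5) => h0 h1.
case: (leqP n 5) => hn.
  have := g_decr R n (5 - n); rewrite subnKC // => H.
  apply: le_trans H; apply: ler_piMr => //; lra.
have := g_tail R (n - 5); rewrite subnKC ?(ltnW hn) // => H.
apply: le_trans H; apply: ler_wpM2l => //.
case/andP: (h_bounds R n) => h2 _; lra.
Qed.
Lemma expR_ge_sum (R : realType) (x : R) m : 0 <= x ->
  \sum_(i < m) x ^+ i / i`!%:R <= expR x.
Proof.
move=> x0; rewrite /expR.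
have -> : \sum_(i < m) x ^+ i / i`!%:R = series (exp_coeff x) m.
  by rewrite seriesEord /=.
apply: nondecreasing_cvgn_le; last exact: is_cvg_series_exp_coeff.
rewrite seriesEnat; apply: nondecreasing_series => n _ _ /=.
by rewrite divr_ge0 // exprn_ge0.
Qed.
Lemma e_lb (R : realType) : (685 / 252 : R) < expR 1.
Proof.
apply: (lt_le_trans _ (@expR_ge_sum R 1 9 ler01)).
rewrite !big_ord_recr big_ord0 /= !expr1n !factS /= !mul1n.
rewrite !div1r.
rewrite fact0 !natrM. lra.
Qed.
Lemma num_gen (R : realFieldType) (p a b c d n1 n2 n3 : nat) :
  (0 < p)%N -> (0 < a)%N -> (0 < b)%N -> (0 < d)%N ->
  (d ^ n3 * b ^ n2 < p ^ n1 * a ^ n2 * c ^ n3)%N ->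
  ((p%:R : R) ^+ n1)^-1 * ((a%:R / b%:R) ^+ n2)^-1 < (c%:R / d%:R) ^+ n3.
Proof.
move=> hp ha hb hd H.
have hp' : (p%:R : R) != 0 by rewrite pnatr_eq0 -lt0n.
have ha' : (a%:R : R) != 0 by rewrite pnatr_eq0 -lt0n.
have hb' : (b%:R : R) != 0 by rewrite pnatr_eq0 -lt0n.
have hd' : (d%:R : R) != 0 by rewrite pnatr_eq0 -lt0n.
have -> : ((p%:R : R) ^+ n1)^-1 * ((a%:R / b%:R) ^+ n2)^-1 =
   (b ^ n2)%N%:R / (p ^ n1 * a ^ n2)%N%:R.
  rewrite !natrM !natrX expr_div_n invf_div invfM. by rewrite mulrCA.
rewrite expr_div_n -!natrX.
have q1 : (0:R) < (p ^ n1 * a ^ n2)%N%:R by rewrite ltr0n muln_gt0 !expn_gt0 hp ha.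
have q2 : (0:R) < (d ^ n3)%N%:R by rewrite ltr0n expn_gt0 hd.
rewrite (ltr_pdivrMr _ _ q1) mulrC mulrA (ltr_pdivlMr _ _ q2) -!natrM ltr_nat.
by rewrite mulnC.
Qed.

Lemma num_gen' (R : realFieldType) (p a b c d n1 n2 n3 : nat) (C D : R) :
  c%:R = C -> d%:R = D ->
  (0 < p)%N -> (0 < a)%N -> (0 < b)%N -> (0 < d)%N ->
  (d ^ n3 * b ^ n2 < p ^ n1 * a ^ n2 * c ^ n3)%N ->
  ((p%:R : R) ^+ n1)^-1 * ((a%:R / b%:R) ^+ n2)^-1 < (C / D) ^+ n3.
Proof. move=> <- <-; exact: num_gen. Qed.

Lemma num_ineq (R : realType) :
  (2^+48 : R)^-1 * (((685%:R / 252%:R) : R)^+19)^-1 <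
  ((3%:R * 7%:R * 15%:R * 31%:R * 31%:R) / 2%:R ^+ 20 : R)^+42.
Proof.
have H : (((2^20)^42 * 252^19 < 2^48 * 685^19 * (3*7*15*31*31)^42)%N) by lia.
have hC : ((3*7*15*31*31)%N%:R : R) = 3%:R * 7%:R * 15%:R * 31%:R * 31%:R by rewrite !natrM.
have hD : ((2^20)%N%:R : R) = 2%:R ^+ 20 by rewrite natrX.
have := @num_gen' R 2 685 252 (3*7*15*31*31) (2^20) 48 19 42 _ _ hC hD isT isT isT (expn_gt0 _ _) H.
exact.
Qed.

Lemma c_lt (R : realType) :
  (2 : R) `^ (- (8%:R / 7%:R)) * expR (- (19%:R / 42%:R)) <
  ((3%:R * 7%:R * 15%:R * 31%:R * 31%:R) / 2%:R ^+ 20 : R).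
Proof.
set a := (2 : R) `^ _; set b := expR _; set t := (_ / _).
have ha0 : 0 <= a by apply: powR_ge0.
have hb0 : 0 <= b by apply: expR_ge0.
have ht0 : 0 <= t by rewrite /t divr_ge0 // ?exprn_ge0 // !mulr_ge0.
rewrite -(@ltr_pXn2r _ 42) // ?nnegrE ?mulr_ge0 //.
have ha : a ^+ 42 = (2 ^+ 48)^-1.
  rewrite /a -powR_mulrn ?powR_ge0 // -powRrM.
  have -> : - (8%:R / 7%:R) * 42%:R = - (48%:R) :> R by lra.
  by rewrite powR_invn.
have hb : b ^+ 42 = (expR 1 ^+ 19)^-1.
  rewrite /b -expRM_natr.
  have -> : - (19%:R / 42%:R) * 42%:R = - (1 * 19%:R) :> R by lra.
  by rewrite expRN expRM_natr.
rewrite exprMn ha hb.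
apply: le_lt_trans (num_ineq R).
rewrite ler_wpM2l ?invr_ge0 ?exprn_ge0 //.
have e0 : 0 < expR (1 : R) by apply: expR_gt0.
have s0 : (0 : R) < 685%:R / 252%:R by apply: divr_gt0; rewrite ltr0n.
rewrite lef_pV2 ?posrE ?exprn_gt0 //.
rewrite lerXn2r ?nnegrE ?ltW //.
exact: e_lb.
Qed.
Lemma card_inv m : #|[set A : 'M['F_2]_m.+1 | nullity A == 0%N]| =
  (2 ^ 'C(m.+1, 2) * \prod_(1 <= i < m.+2) (2 ^ i - 1))%N.
Proof.
have := @card_GL ('F_2 : finFieldType) m.+1 (ltn0Sn m).
rewrite card_Fp // => <-.
rewrite cardsT /= card_sub; apply: eq_card => A.
rewrite !inE /nullity mxrank_ker mxrank_tr subn_eq0.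
by rewrite -row_free_unit /row_free eqn_leq rank_leq_row.
Qed.

Lemma Pprop_g (R : realType) m : Pprop R 0 m.+1 = g R m.+1.
Proof. by rewrite /Pprop card_inv card_mx card_Fp // -gE. Qed.

Theorem mainTheorem11 (R : realType) (n : nat) (hn : (1 <= n)%N) :
  (2 : R) `^ (- (8%:R / 7%:R)) * expR (- (19%:R / 42%:R)) < Pprop R 0 n.
Proof.
case: n hn => // m _.
rewrite Pprop_g.
exact: lt_le_trans (c_lt R) (g_lb R m.+1).
Qed.
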